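(* Let $r>0$, let $n\ge \nu\ge 2$, and let $\hat\alpha\ne0$, $\hat\beta$, $\hat\gamma$ be real numbers. Let $X^{(0)}=(x^{(0)}(1),\dots,x^{(0)}(n))$ be a real sequence whose $r$-th accumulated sequence $X^{(r)}=X^{(0)}A^r$ satisfies $$x^{(r)}(k)=\left[x^{(0)}(1)-\frac{\hat\beta}{\hat\alpha}+\frac{\hat\beta}{\hat\alpha^2}-\frac{\hat\gamma}{\hat\alpha}\right]e^{-\hat\alpha(k-1)}+\frac{\hat\beta}{\hat\alpha}k-\frac{\hat\beta}{\hat\alpha^2}+\frac{\hat\gamma}{\hat\alpha},\quad k=2,\dots,n.$$ Let $(a,b,c)$ be the least-squares estimate $(a,b,c)^{\mathcal T}=(B^{\mathcal T}B)^{-1}B^{\mathcal T}Y$ computed from this sequence, and let $(\alpha,\beta,\gamma)$ be the FAGMO(1,1,$k$) parameters $$\alpha=\ln\frac{2+a}{2-a},\qquad \beta=\frac{b}{a}\ln\frac{2+a}{2-a},\qquad \gamma=\frac{\alpha c}{a}-\frac{\alpha b}{2a}+\frac{\beta}{\alpha}+\frac{\beta}{2}-\frac{\beta}{a}$$ (assuming all these quantities are well defined). Then $\alpha=\hat\alpha$, $\beta=\hat\beta$, $\gamma=\hat\gamma$, and the FAGMO(1,1,$k$) predicted values $\hat x^{(0)}(k)$, $k=1,\dots,n$, coincide with the given data $x^{(0)}(k)$.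
   Context: Notation: $A^r$ is the $n\times n$ upper triangular Toeplitz matrix with $(j,l)$ entry $\left[{}_{l-j}^{r}\right]$ for $l\ge j$, where $\left[{}_0^r\right]=1$ and $\left[{}_i^r\right]=\frac{r(r+1)\cdots(r+i-1)}{i!}$; $D^r=(A^r)^{-1}$ is the upper triangular Toeplitz matrix with entries $\left[{}_{l-j}^{-r}\right]$, $\left[{}_0^{-r}\right]=1$, $\left[{}_i^{-r}\right]=\frac{(-r)(-r+1)\cdots(-r+i-1)}{i!}$. Least squares: with $z^{(r)}(k)=\tfrac12(x^{(r)}(k-1)+x^{(r)}(k))$ and $x^{(r-1)}(k):=x^{(r)}(k)-x^{(r)}(k-1)$, $B$ is the $(\nu-1)\times 3$ matrix with rows $\big(-z^{(r)}(k),\ \tfrac{2k-1}{2},\ 1\big)$ and $Y$ the column vector with entries $x^{(r-1)}(k)$, $k=2,\dots,\nu$ ($\nu$ = number of samples used to build the model). FAGMO(1,1,$k$) prediction: $\hat x^{(r)}(1)=x^{(0)}(1)$ and for $k\ge2$, $\hat x^{(r)}(k)=\left[x^{(0)}(1)-\frac{\beta}{\alpha}+\frac{\beta}{\alpha^2}-\frac{\gamma}{\alpha}\right]e^{-\alpha(k-1)}+\frac{\beta}{\alpha}k-\frac{\beta}{\alpha^2}+\frac{\gamma}{\alpha}$; the predicted values are $(\hat x^{(0)}(1),\dots,\hat x^{(0)}(n))=(\hat x^{(r)}(1),\dots,\hat x^{(r)}(n))D^r$. *)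

(* Defs.v *)
From HB Require Import structures.
From mathcomp Require Import all_boot all_order all_algebra.
From mathcomp Require Import reals sequences exp.
Set Implicit Arguments. Unset Strict Implicit. Unset Printing Implicit Defensive.
Import Order.TTheory GRing.Theory Num.Theory.
Local Open Scope ring_scope.

Section FAGMO.
Variable R : realType.

Definition gbin (r : R) (i : nat) : R :=
  (\prod_(j < i) (r + j%:R)) / (i`!)%:R.

Definition Amat (n : nat) (r : R) : 'M[R]_n :=
  \matrix_(j < n, l < n) (if (j <= l)%N then gbin r (l - j) else 0).

Definition Dmat (n : nat) (r : R) : 'M[R]_n :=
  \matrix_(j < n, l < n) (if (j <= l)%N then gbin (- r) (l - j) else 0).

(* 1-based access to the entries of a row vector: x(k) for k = 1..n
   (returns 0 out of range; only used in range) *)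
Definition ent (n : nat) (X : 'rV[R]_n) (k : nat) : R :=
  if @insub nat (fun m => (m < n)%N) 'I_n k.-1 is Some i then X 0 i else 0.

Section LSE.
Variables (n nu : nat) (r : R) (X0 : 'rV[R]_n).

Definition Xacc : 'rV[R]_n := X0 *m Amat n r.

Definition zr (k : nat) : R := (ent Xacc k.-1 + ent Xacc k) / 2.

Definition xrm1 (k : nat) : R := ent Xacc k - ent Xacc k.-1.

Definition Bmat : 'M[R]_(nu.-1, 3) :=
  \matrix_(i < nu.-1, j < 3)
    (let k := (i + 2)%N in
     if val j == 0%N then - zr k
     else if val j == 1%N then ((2 * k)%:R - 1) / 2
     else 1).

Definition Yvec : 'cV[R]_(nu.-1) := \col_(i < nu.-1) xrm1 (i + 2)%N.

Definition abc : 'cV[R]_3 := invmx (Bmat^T *m Bmat) *m Bmat^T *m Yvec.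

Definition lse_a : R := abc (@Ordinal 3 0 isT) 0.
Definition lse_b : R := abc (@Ordinal 3 1 isT) 0.
Definition lse_c : R := abc (@Ordinal 3 2 isT) 0.

Definition fa_alpha : R := ln ((2 + lse_a) / (2 - lse_a)).
Definition fa_beta : R := lse_b / lse_a * ln ((2 + lse_a) / (2 - lse_a)).
Definition fa_gamma : R :=
  fa_alpha * lse_c / lse_a - fa_alpha * lse_b / (2 * lse_a)
  + fa_beta / fa_alpha + fa_beta / 2 - fa_beta / lse_a.

Definition xhat_r (k : nat) : R :=
  if k == 1%N then ent X0 1
  else (ent X0 1 - fa_beta / fa_alpha + fa_beta / fa_alpha ^+ 2
          - fa_gamma / fa_alpha) * expR (- fa_alpha * (k%:R - 1))
       + fa_beta / fa_alpha * k%:R - fa_beta / fa_alpha ^+ 2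
       + fa_gamma / fa_alpha.

Definition Xhat0 : 'rV[R]_n := (\row_(i < n) xhat_r i.+1) *m Dmat n r.

End LSE.
End FAGMO.

(* Main.v *)
Require Import Defs.
From HB Require Import structures.
From mathcomp Require Import all_boot all_order all_algebra.
From mathcomp Require Import reals sequences exp.
From mathcomp Require Import ring lra.
Import Order.TTheory GRing.Theory Num.Theory.
Set Implicit Arguments. Unset Strict Implicit.
Local Open Scope ring_scope.

Section Helpers.
Variable R : realType.

Lemma gbinS (r : R) i : gbin r i.+1 * i.+1%:R = (r + i%:R) * gbin r i.
Proof.
rewrite /gbin big_ord_recr /= factS natrM.
have h1 : (i`!)%:R != 0 :> R by rewrite pnatr_eq0 -lt0n fact_gt0.
have h2 : (i%:R + 1) != 0 :> R by rewrite natr1 pnatr_eq0.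
field. by rewrite h1 addrC h2.

Qed.

Lemma gbin0 (r : R) : gbin r 0 = 1.
Proof. by rewrite /gbin big_ord0 divr1. Qed.

Definition cc (r : R) m := \sum_(i < m.+1) gbin r i * gbin (-r) (m - i).

Lemma cc_step (r : R) m : m.+1%:R * cc r m.+1 = m%:R * cc r m.
Proof.
have E : forall i : 'I_m.+2, m.+1%:R * (gbin r i * gbin (-r) (m.+1 - i))
   = i%:R * gbin r i * gbin (-r) (m.+1 - i) + gbin r i * ((m.+1 - i)%:R * gbin (-r) (m.+1 - i)).
  move=> i; rewrite natrB; last by rewrite -ltnS ltn_ord.
  ring.
rewrite /cc mulr_sumr (eq_bigr _ (fun i _ => E i)) big_split /=.
rewrite big_ord_recl /= mul0r mul0r add0r.
rewrite [X in _ + X = _]big_ord_recr /= subnn mul0r mulr0 addr0.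
rewrite mulr_sumr -big_split /=; apply: eq_bigr => i _.
rewrite /bump /= add1n subSS.
have hi : (i <= m)%N by rewrite -ltnS ltn_ord.
rewrite subSn // [_ * gbin r _.+1]mulrC gbinS [_%:R * gbin _ _.+1]mulrC gbinS natrB //.
ring.
Qed.

Lemma cc_pos (r : R) m : (0 < m)%N -> cc r m = 0.
Proof.
case: m => // m _; elim: m => [|m IH].
  have := cc_step r 0; by rewrite mul0r mul1r.
have := cc_step r m.+1; rewrite IH mulr0 => /eqP.
by rewrite mulf_eq0 pnatr_eq0 /= => /eqP.
Qed.

Lemma cc0 (r : R) : cc r 0 = 1.
Proof. by rewrite /cc big_ord_recl big_ord0 !gbin0 mulr1 addr0. Qed.


Lemma AD n (r : R) : Amat n r *m Dmat n r = 1%:M.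
Proof.
apply/matrixP => j l; rewrite !mxE.
pose F k := (if (j <= k)%N then gbin r (k - j) else 0) *
   (if (k <= l)%N then gbin (- r) (l - k) else 0).
rewrite (eq_bigr (fun k : 'I_n => F k)); last by move=> k _; rewrite !mxE.
rewrite -(big_mkord xpredT F).
case: (leqP j l) => hjl; last first.
  rewrite big1_seq; last first.
    move=> k _; rewrite /F; case: (leqP j k) => h1; last by rewrite mul0r.
    by rewrite leqNgt (leq_trans hjl h1) mulr0.
  have -> : (j == l) = false by apply/eqP => E; move: hjl; rewrite E ltnn.
  by [].
have hl : (l < n)%N by [].
rewrite (big_cat_nat (n := j)) //=; last by rewrite (leq_trans hjl) // ltnW.
rewrite big1_seq; last first.
  move=> k /andP[_]; rewrite mem_index_iota => /andP [_ hk]; by rewrite /F leqNgt hk mul0r.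
rewrite add0r (big_cat_nat (n := l.+1)) //=.
rewrite [X in _ + X]big1_seq; last first.
  move=> k /andP[_]; rewrite mem_index_iota => /andP [hk _]; by rewrite /F [(k <= l)%N]leqNgt hk mulr0.
rewrite addr0 -{1}(add0n j) big_addn -/(nat_of_ord l) big_mkord.
have -> : (l.+1 - j = (l - j).+1)%N by rewrite subSn.
rewrite (eq_bigr (fun i : 'I_(l-j).+1 => gbin r i * gbin (-r) (l - j - i))); last first.
  move=> i _; rewrite /F leq_addl addnK.
  have hi : (i + j <= l)%N by rewrite addnC -leq_subRL // -ltnS; apply: ltn_ord.
  by rewrite hi subnDA subnAC.
rewrite (_ : \sum_(i < (l - j).+1) _ = cc r (l - j)) //.
case: (eqVneq j l) => [->|hne]; first by rewrite subnn cc0.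
rewrite cc_pos; last by rewrite subn_gt0 ltn_neqAle hne.
  by []. by rewrite ltnW.
Qed.

Definition Fx (x1 ah bh gh : R) (k : nat) : R :=
  (x1 - bh / ah + bh / ah ^+ 2 - gh / ah) * expR (- ah * (k%:R - 1))
       + bh / ah * k%:R - bh / ah ^+ 2 + gh / ah.

Lemma Fx1 x1 ah bh gh : Fx x1 ah bh gh 1 = x1.
Proof. rewrite /Fx subrr mulr0 expR0 mulr1; ring. Qed.

Lemma entS n (X : 'rV[R]_n) (i : 'I_n) : ent X i.+1 = X 0 i.
Proof. by rewrite /ent /= valK. Qed.

Lemma key (x1 ah bh gh : R) (i : nat) : ah != 0 ->
  let e := expR ah in
  let a0 := 2 * (e - 1) / (e + 1) in
  let b0 := a0 * bh / ah in
  let c0 := bh / ah + a0 * (- bh / ah ^+ 2 + gh / ah) in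
  Fx x1 ah bh gh i.+2 - Fx x1 ah bh gh i.+1 =
  - ((Fx x1 ah bh gh i.+1 + Fx x1 ah bh gh i.+2) / 2) * a0
  + ((2 * i.+2)%:R - 1) / 2 * b0 + c0.
Proof.
move=> ha e a0 b0 c0.
have h1 : i.+1%:R = i%:R + 1 :> R by rewrite -natr1.
have h2 : i.+2%:R = i%:R + 2 :> R by rewrite -natr1 -natr1; ring.
have h3 : (2 * i.+2)%:R = 2 * (i%:R + 2) :> R by rewrite natrM h2.
have E : expR (- ah * (i.+1%:R - 1)) = expR (- ah * (i.+2%:R - 1)) * e.
  rewrite /e -expRD; congr expR; rewrite h1 h2; ring.
have he : e + 1 != 0 by apply: lt0r_neq0; rewrite /e; have := expR_gt0 ah; lra.
rewrite /Fx E h3; subst b0 c0 a0; clear E.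
move: he; rewrite h1 h2; set t := i%:R; set E2 := expR _; move: e => e he.
field.
by rewrite ha he.
Qed.

End Helpers.

Theorem theorem4 (R : realType) (r : R) (n nu : nat) (ah bh gh : R)
  (X0 : 'rV[R]_n) :
  0 < r -> (2 <= nu)%N -> (nu <= n)%N -> ah != 0 ->
  (forall k : nat, (2 <= k <= n)%N ->
     ent (Xacc r X0) k =
       (ent X0 1 - bh / ah + bh / ah ^+ 2 - gh / ah) * expR (- ah * (k%:R - 1))
       + bh / ah * k%:R - bh / ah ^+ 2 + gh / ah) ->
  (* well-definedness of the estimates and of the FAGMO parameters *)
  (Bmat nu r X0)^T *m Bmat nu r X0 \in unitmx ->
  lse_a nu r X0 != 0 -> lse_a nu r X0 != 2 ->
  0 < (2 + lse_a nu r X0) / (2 - lse_a nu r X0) ->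
  fa_alpha nu r X0 != 0 ->
  [/\ fa_alpha nu r X0 = ah, fa_beta nu r X0 = bh, fa_gamma nu r X0 = gh
    & Xhat0 nu r X0 = X0].
Proof.
move=> _ h2nu hnun ha H hU ha0 ha2 _ _.
have hn : (0 < n)%N by apply: leq_trans hnun; apply: leq_trans h2nu.
pose i0 : 'I_n := Ordinal hn.
have hx1 : ent (Xacc r X0) 1 = ent X0 1.
  have := entS (Xacc r X0) i0; have := entS X0 i0; rewrite /= => -> ->.
  rewrite /Xacc mxE (bigD1 i0) //= big1 ?addr0.
    by rewrite mxE leqnn subnn gbin0 mulr1.
  move=> l hl; rewrite mxE.
  have -> : (l <= i0)%N = false.
    rewrite leqn0; apply/negP => /eqP E; move/negP: hl; apply; apply/eqP; exact: val_inj.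
  by rewrite mulr0.
have hx : forall k, (1 <= k <= n)%N -> ent (Xacc r X0) k = Fx (ent X0 1) ah bh gh k.
  move=> [|[|k]] // hk; first by rewrite hx1 Fx1.
  exact: H.
pose e := expR ah.
pose a0 := 2 * (e - 1) / (e + 1).
pose b0 := a0 * bh / ah.
pose c0 := bh / ah + a0 * (- bh / ah ^+ 2 + gh / ah).
pose th : 'cV[R]_3 := \col_(j < 3) (if val j == 0%N then a0 else if val j == 1%N then b0 else c0).
have hB : Bmat nu r X0 *m th = Yvec nu r X0.
  apply/matrixP => i j; rewrite ord1 !mxE !big_ord_recl big_ord0 !mxE /=.
  have hi : (i.+2 <= n)%N.
    have G : forall k, (k < nu.-1)%N -> (k.+2 <= n)%N.
      move=> k hk; apply: leq_trans hnun; rewrite -(prednK (ltnW h2nu)); by rewrite ltnS.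
    exact: G (ltn_ord i).
  rewrite addn2 /zr /xrm1 /= !hx ?hi ?(ltnW hi) //.
  have K := key (ent X0 1) bh gh i ha; simpl in K.
  rewrite mul1r addr0 addrA K.
  by rewrite /a0 /b0 /c0 /e.
have habc : abc nu r X0 = th.
  by rewrite /abc -hB mulmxA -(mulmxA (invmx _)) mulVmx // mul1mx.
have hA : lse_a nu r X0 = a0 by rewrite /lse_a habc mxE.
have hBb : lse_b nu r X0 = b0 by rewrite /lse_b habc mxE.
have hC : lse_c nu r X0 = c0 by rewrite /lse_c habc mxE.
have he : e + 1 != 0 by apply: lt0r_neq0; rewrite /e; have := expR_gt0 ah; lra.
have ha00 : a0 != 0 by rewrite -hA.
have hE : (2 + a0) / (2 - a0) = e.
  rewrite /a0; field.
  rewrite he /= (_ : 2 * (e + 1) - 2 * (e - 1) = 4); last by ring.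
  by apply: lt0r_neq0; lra.
have hal : fa_alpha nu r X0 = ah by rewrite /fa_alpha hA hE /e expRK.
have hbe : fa_beta nu r X0 = bh.
  rewrite /fa_beta hA hBb hE /e expRK /b0; field; by rewrite ha ha00.
have hga : fa_gamma nu r X0 = gh.
  rewrite /fa_gamma hal hbe hA hBb hC /c0 /b0; field; by rewrite ha ha00.
split => //.
rewrite /Xhat0.
have -> : \row_(i < n) xhat_r nu r X0 i.+1 = X0 *m Amat n r.
  apply/rowP => i; rewrite mxE -(entS (X0 *m Amat n r)) -/(Xacc r X0) hx; last by rewrite ltn_ord.
  rewrite /xhat_r hal hbe hga; case: eqP => [->|_]; first by rewrite Fx1.
  by [].
by rewrite -mulmxA AD mulmx1.
Qed.
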